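(* Consider the energy-efficiency maximization problem (P1) described in the context. The maximum of the system energy efficiency $\eta_{EE}$ over the feasible set of (P1) can always be obtained when each wireless device performs local computation during the whole time block, i.e., with execution times $\tau_k^* = T$ for all $k\in\{1,\dots,K\}$.
   Context: System: one power beacon (PB) with transmit power $P_0\ge 0$, one MEC server, a reconfigurable intelligent surface (RIS) with $N$ elements, and $K$ wireless devices (WDs), all nodes single-antenna. Given channels $g_{\mathrm{PU},k}\in\mathbb{C}$, $\mathbf{g}_{\mathrm{PI}},\mathbf{g}_{\mathrm{IU},k}\in\mathbb{C}^{N}$, $h_{\mathrm{UM},k}\in\mathbb{C}$, $\mathbf{h}_{\mathrm{UI},k},\mathbf{h}_{\mathrm{IM}}\in\mathbb{C}^{N}$. For phases $\boldsymbol\theta=(\theta_1,\dots,\theta_N)$ let $\boldsymbol\Theta=\mathrm{diag}(e^{j\theta_1},\dots,e^{j\theta_N})$ and $g_k=g_{\mathrm{PU},k}+\mathbf{g}_{\mathrm{PI}}^H\boldsymbol\Theta\mathbf{g}_{\mathrm{IU},k}$, $h_k=h_{\mathrm{UM},k}+\mathbf{h}_{\mathrm{UI},k}^H\boldsymbol\Theta\mathbf{h}_{\mathrm{IM}}$. Optimization variables: backscatter times $t^b_k\ge0$, active-transmission times $t^o_k\ge0$, backscattering coefficients $\rho_k\in[0,1]$, PB power $P_0\le P_{\max}$, WD transmit powers $p_k\ge0$, execution times $0\le\tau_k\le T$, CPU frequencies $0\le f_k\le f_{\max}$, and phases $\theta_n$ (unit-modulus reflection). Positive constants: $T,\sigma^2,\zeta,C_{\mathrm{cpu}},\epsilon_k,\delta,P_{c,k},p_{c,k},a_k,b_k,c_k$,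 $Q_k\ge0$, $\gamma_{\min,k}$. Throughputs: $\Gamma^b_k=t^b_k\log_2\!\big(1+\zeta\rho_kP_0|h_k|^2|g_k|^2/\sigma^2\big)$, $\Gamma^o_k=t^o_k\log_2\!\big(1+p_k|h_k|^2/\sigma^2\big)$, $\Gamma_k=\tau_kf_k/C_{\mathrm{cpu}}$, $R_{\mathrm{sum}}=\sum_{k=1}^K(\Gamma^b_k+\Gamma^o_k+\Gamma_k)$. Energies: $E_{1,k}=P_{c,k}t^b_k$, $E_{2,k}=\frac{p_k}{\delta}t^o_k+p_{c,k}t^o_k+\epsilon_kf_k^3\tau_k$, $E_{\mathrm{total}}=\sum_k(E_{1,k}+E_{2,k})$. Harvested energy: $E^b_k=\Big(\frac{a_k(1-\rho_k)P_0|g_k|^2+b_k}{(1-\rho_k)P_0|g_k|^2+c_k}-\frac{b_k}{c_k}\Big)t^b_k$, $P^b_k=\frac{a_kP_0|g_k|^2+b_k}{P_0|g_k|^2+c_k}-\frac{b_k}{c_k}$, $E^t_k=E^b_k+\sum_{i\ne k}P^b_kt^b_i$. Problem (P1): maximize $\eta_{EE}=R_{\mathrm{sum}}/E_{\mathrm{total}}$ over all the variables subject to: $\Gamma^b_k+\Gamma^o_k+\Gamma_k\ge\gamma_{\min,k}$ for all $k$; $E_{1,k}+E_{2,k}\le E^t_k+Q_k$ for all $k$; $\sum_{k=1}^K(t^b_k+t^o_k)\le T$ and $0\le\tau_k\le T$; $0\le f_k\le f_{\max}$; $0\le\rho_k\le1$; $P_0\le P_{\max}$; $|e^{j\theta_n}|=1$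 for all $n$; $p_k,t^b_k,t^o_k\ge0$. *)

(* Defs.v *)
From Stdlib Require Import Reals.
From Coquelicot Require Import Coquelicot.
Open Scope R_scope.

Fixpoint sumR (n : nat) (f : nat -> R) : R :=
  match n with
  | O => 0
  | S m => sumR m f + f m
  end.

Definition log2 (x : R) : R := ln x / ln 2.

Definition cexpj (th : R) : C := (cos th, sin th).

(* Hermitian inner product  a^H Theta b = sum_n conj(a_n) e^{j th_n} b_n *)
Fixpoint sumC (n : nat) (g : nat -> C) : C :=
  match n with
  | O => RtoC 0
  | S m => Cplus (sumC m g) (g m)
  end.

Definition ris_term (N : nat) (a b : nat -> C) (th : nat -> R) : C :=
  sumC N (fun n => Cmult (Cmult (Cconj (a n)) (cexpj (th n))) (b n)).

(* System data: number of RIS elements N, number of WDs K (indices 0..K-1),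
   channels and constants. Vectors in C^N are functions nat -> C on 0..N-1. *)
Record SysParams := {
  N : nat;
  K : nat;
  gPU : nat -> C;
  gPI : nat -> C;
  gIU : nat -> nat -> C;     (* g_{IU,k} (entry n) : gIU k n *)
  hUM : nat -> C;
  hUI : nat -> nat -> C;     (* h_{UI,k} (entry n) : hUI k n *)
  hIM : nat -> C;
  Tblk : R; sigma2 : R; zeta : R; Ccpu : R; delta : R;
  eps : nat -> R; Pc : nat -> R; pc : nat -> R;
  a : nat -> R; b : nat -> R; c : nat -> R;
  Q : nat -> R; gmin : nat -> R;
  Pmax : R; fmax : R
}.

Definition params_ok (s : SysParams) : Prop :=
  0 < Tblk s /\ 0 < sigma2 s /\ 0 < zeta s /\ 0 < Ccpu s /\ 0 < delta s /\
  (forall k, (k < K s)%nat ->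
     0 < eps s k /\ 0 < Pc s k /\ 0 < pc s k /\ 0 < a s k /\ 0 < b s k /\
     0 < c s k /\ 0 <= Q s k /\ 0 < gmin s k).

Record Vars := {
  tb : nat -> R;
  to : nat -> R;
  rho : nat -> R;
  P0 : R;
  p : nat -> R;
  tau : nat -> R;
  f : nat -> R;
  theta : nat -> R
}.

Definition gk (s : SysParams) (v : Vars) (k : nat) : C :=
  Cplus (gPU s k) (ris_term (N s) (gPI s) (gIU s k) (theta v)).
Definition hk (s : SysParams) (v : Vars) (k : nat) : C :=
  Cplus (hUM s k) (ris_term (N s) (hUI s k) (hIM s) (theta v)).

Definition G2 s v k := (Cmod (gk s v k)) ^ 2.
Definition H2 s v k := (Cmod (hk s v k)) ^ 2.

Definition Gam_b s v k :=
  tb v k * log2 (1 + zeta s * rho v k * P0 v * H2 s v k * G2 s v k / sigma2 s).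
Definition Gam_o s v k :=
  to v k * log2 (1 + p v k * H2 s v k / sigma2 s).
Definition Gam_l s v k := tau v k * f v k / Ccpu s.
Definition Gam s v k := Gam_b s v k + Gam_o s v k + Gam_l s v k.

Definition Rsum s v := sumR (K s) (Gam s v).

Definition E1 s v k := Pc s k * tb v k.
Definition E2 s v k :=
  p v k / delta s * to v k + pc s k * to v k + eps s k * f v k ^ 3 * tau v k.
Definition Etotal s v := sumR (K s) (fun k => E1 s v k + E2 s v k).

Definition Eb s v k :=
  ((a s k * (1 - rho v k) * P0 v * G2 s v k + b s k) /
     ((1 - rho v k) * P0 v * G2 s v k + c s k) - b s k / c s k) * tb v k.
Definition Pb s v k :=
  (a s k * P0 v * G2 s v k + b s k) / (P0 v * G2 s v k + c s k) - b s k / c s k.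
Definition Et s v k :=
  Eb s v k + sumR (K s) (fun i => if Nat.eqb i k then 0 else Pb s v k * tb v i).

Definition EE s v := Rsum s v / Etotal s v.

(* feasible set of (P1); |e^{j theta_n}| = 1 holds by construction of cexpj *)
Definition feasible (s : SysParams) (v : Vars) : Prop :=
  (forall k, (k < K s)%nat ->
     Gam s v k >= gmin s k /\
     E1 s v k + E2 s v k <= Et s v k + Q s k /\
     0 <= tau v k <= Tblk s /\
     0 <= f v k <= fmax s /\
     0 <= rho v k <= 1 /\
     0 <= p v k /\ 0 <= tb v k /\ 0 <= to v k) /\
  sumR (K s) (fun k => tb v k + to v k) <= Tblk s /\
  0 <= P0 v <= Pmax s.

(* Main.v *)
Require Import Defs.
From Stdlib Require Import Reals Lra Psatz.
From Coquelicot Require Import Coquelicot.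
Open Scope R_scope.

Definition cbrt (x : R) : R :=
  match Rle_dec x 0 with left _ => 0 | right _ => Rpower x (1/3) end.

Lemma cbrt_spec x : 0 <= x <= 1 -> 0 <= cbrt x <= 1 /\ cbrt x ^ 3 = x.
Proof.
  intros [H0 H1]. unfold cbrt. destruct (Rle_dec x 0) as [h|h].
  - split; [lra|]. simpl. assert (x = 0) by lra. subst. ring.
  - assert (Hx : 0 < x) by lra.
    assert (Hp : 0 < Rpower x (1/3)) by (unfold Rpower; apply exp_pos).
    assert (Hc : Rpower x (1/3) ^ 3 = x).
    { rewrite <- (Rpower_pow 3 _ Hp). rewrite Rpower_mult.
      replace (1/3 * INR 3) with 1 by (simpl; field). apply Rpower_1; lra. }
    split; [|exact Hc]. split; [lra|].
    destruct (Rle_dec (Rpower x (1/3)) 1) as [h1|h1]; [exact h1|].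
    exfalso. set (r := Rpower x (1/3)) in *. nra.
Qed.

Lemma sumR_le n f g : (forall k, (k < n)%nat -> f k <= g k) -> sumR n f <= sumR n g.
Proof.
  induction n; simpl; intros H; [lra|].
  assert (sumR n f <= sumR n g) by (apply IHn; intros; apply H; lia).
  assert (f n <= g n) by (apply H; lia). lra.
Qed.

Lemma sumR_eq n f g : (forall k, (k < n)%nat -> f k = g k) -> sumR n f = sumR n g.
Proof.
  induction n; simpl; intros H; [lra|].
  rewrite IHn by (intros; apply H; lia). rewrite H by lia. reflexivity.
Qed.

Lemma sumR_ge0 n f : (forall k, (k < n)%nat -> 0 <= f k) -> 0 <= sumR n f.
Proof.
  induction n; simpl; intros H; [lra|].
  assert (0 <= sumR n f) by (apply IHn; intros; apply H; lia).
  assert (0 <= f n) by (apply H; lia). lra.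
Qed.

Theorem proposition1 (s : SysParams) (Hs : params_ok s) (v : Vars) :
  feasible s v ->
  exists v' : Vars,
    feasible s v' /\
    (forall k, (k < K s)%nat -> tau v' k = Tblk s) /\
    EE s v <= EE s v'.
Proof.
  intros [Hk [HT HP]].
  destruct Hs as [HTp [Hsig [Hz [HC [Hd Hks]]]]].
  set (r := fun k => cbrt (tau v k / Tblk s)).
  set (v' := Build_Vars (tb v) (to v) (rho v) (P0 v) (p v)
                (fun _ => Tblk s) (fun k => Defs.f v k * r k) (theta v)).
  assert (Hr : forall k, (k < K s)%nat -> 0 <= r k <= 1 /\ r k ^ 3 = tau v k / Tblk s).
  { intros k hk. apply cbrt_spec. destruct (Hk k hk) as [_ [_ [Ht _]]].
    split; [apply Rdiv_le_0_compat; lra|].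
    apply (Rmult_le_reg_r (Tblk s)); [lra|]. field_simplify; lra. }
  assert (HE : forall k, (k < K s)%nat -> Defs.E1 s v' k + E2 s v' k = Defs.E1 s v k + E2 s v k).
  { intros k hk. destruct (Hr k hk) as [_ h3]. unfold Defs.E1, E2; simpl; fold (r k).
    replace (eps s k * (Defs.f v k * r k * (Defs.f v k * r k * (Defs.f v k * r k * 1))) * Tblk s) with (eps s k * Defs.f v k ^ 3 * (r k ^ 3 * Tblk s)) by (simpl; ring). rewrite h3.
    field. lra. }
  assert (HG : forall k, (k < K s)%nat -> Gam s v k <= Gam s v' k).
  { intros k hk. destruct (Hr k hk) as [[h0 h1] h3].
    destruct (Hk k hk) as [_ [_ [Ht [Hf _]]]].
    unfold Gam. change (Gam_b s v' k) with (Gam_b s v k).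
    change (Gam_o s v' k) with (Gam_o s v k).
    unfold Gam_l; simpl.
    assert (tau v k <= Tblk s * r k).
    { assert (tau v k = Tblk s * r k ^ 3) by (rewrite h3; field; lra).
      rewrite H. assert (r k ^ 3 <= r k) by nra. nra. }
    unfold Rdiv. apply Rplus_le_compat_l. apply Rmult_le_compat_r; [left; apply Rinv_0_lt_compat; lra|]. nra. }
  exists v'. split; [|split].
  - split; [|split; [exact HT| exact HP]].
    intros k hk. destruct (Hk k hk) as [Hg [Hen [Ht [Hf [Hrho [Hp [Htb Hto]]]]]]].
    destruct (Hr k hk) as [[h0 h1] _].
    split; [specialize (HG k hk); lra|].
    split; [rewrite (HE k hk); exact Hen|].
    split; [simpl; lra|]. split; [simpl; nra|]. simpl; tauto.
  - intros; reflexivity.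
  - unfold EE.
    assert (HEt : Etotal s v' = Etotal s v) by (apply sumR_eq; exact HE).
    rewrite HEt.
    assert (HR : Rsum s v <= Rsum s v') by (apply sumR_le; exact HG).
    assert (H0 : 0 <= / Etotal s v).
    { destruct (Req_dec (Etotal s v) 0) as [e|e].
      - rewrite e, Rinv_0. lra.
      - assert (0 <= Etotal s v).
        { apply sumR_ge0. intros k hk.
          destruct (Hk k hk) as [_ [_ [Ht [Hf [_ [Hp [Htb Hto]]]]]]].
          destruct (Hks k hk) as [He [HPc [Hpc _]]].
          unfold Defs.E1, E2.
          assert (0 <= p v k / delta s) by (apply Rdiv_le_0_compat; lra).
          assert (0 <= Defs.f v k ^ 3) by (apply pow_le; lra).
          assert (0 <= eps s k * Defs.f v k ^ 3) by nra. nra. }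
        left; apply Rinv_0_lt_compat; lra. }
    unfold Rdiv. nra.
Qed.
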